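(* Let $P$ be a finite poset, $\mathfrak{m}=(x_p)_{p\in P}\subseteq k[x_P]$ and $d\ge2$. Then $\mathfrak{m}^d$ is $P$-stable if and only if $P$ is a disjoint union of posets whose Hasse diagrams are rooted trees with the roots on top.
   Context: $k$ is a field and $k[x_P]$ the polynomial ring in variables $x_p$, $p\in P$. A rooted tree with the root on top means a connected poset whose Hasse diagram is a tree and which has a unique maximal element (the root). For $b\in P$, a $b$-chain is a multichain $C: p_1\le\dots\le p_r$ with $p_r\le b$; its length is $r$ and $m_C=\prod x_{p_i}$; $C$ is in a monomial $m$ if $m_C\mid m$; it is a longest $b$-chain in $m$ if no $b$-chain in $m$ is longer; it goes through $a$ if $a\le b$ and $a$ is comparable to every $p_i$. For an antichain $B$, $m_B=\prod_{b\in B}x_b$. A monomial ideal $I$ is $P$-stable if whenever $m=n\,m_B\in I$ ($n$ a monomial, $B$ an antichain) and $a\in P$ is such that for each $b\in B$ some longest $b$-chain in $m$ goes through $a$, then $n\,x_a\in I$. *)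

(* Defs.v *)
From HB Require Import structures.
From mathcomp Require Import all_boot all_order.
Set Implicit Arguments. Unset Strict Implicit. Unset Printing Implicit Defensive.
Import Order.Theory.
Local Open Scope order_scope.

Section PStable.
Variables (disp : Order.disp_t) (T : finPOrderType disp).

(* A monomial of k[x_P] is represented by its exponent vector. *)
Definition mono := {ffun T -> nat}.

Definition mmul (m n : mono) : mono := [ffun p => (m p + n p)%N].
Definition xvar (a : T) : mono := [ffun p => nat_of_bool (p == a)].
Definition mset (B : {set T}) : mono := [ffun p => nat_of_bool (p \in B)].
Definition seq_mono (s : seq T) : mono := [ffun p => count_mem p s].
Definition mdvd (m n : mono) : bool := [forall p, (m p <= n p)%N].

Definition bchain (b : T) (C : seq T) : bool :=
  sorted (fun x y : T => x <= y) C && (last b C <= b).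
Definition chain_in (C : seq T) (m : mono) : bool := mdvd (seq_mono C) m.
Definition longest_bchain (b : T) (C : seq T) (m : mono) : Prop :=
  [/\ bchain b C, chain_in C m &
      forall C' : seq T, bchain b C' -> chain_in C' m -> (size C' <= size C)%N].
Definition goes_through (a b : T) (C : seq T) : bool :=
  (a <= b) && all (fun p => a >=< p) C.

Definition antichain (B : {set T}) : Prop :=
  {in B &, forall x y : T, x >=< y -> x = y}.

(* a monomial ideal is given by its set of monomials *)
Definition P_stable (I : mono -> Prop) : Prop :=
  forall (n : mono) (B : {set T}) (a : T),
    antichain B -> I (mmul n (mset B)) ->
    (forall b, b \in B -> exists C : seq T,
        longest_bchain b C (mmul n (mset B)) /\ goes_through a b C) ->
    I (mmul n (xvar a)).

(* monomials of m^e, m = (x_p)_{p in P}: those divisible by a product of e variables *)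
Definition maxpow (e : nat) (m : mono) : Prop :=
  exists s : seq T, size s = e /\ mdvd (seq_mono s) m.

Definition covers_in (S : {set T}) (x y : T) : bool :=
  [&& x \in S, y \in S, x < y & [forall z, ~~ [&& z \in S, x < z & z < y]]].
Definition hasse_edge (S : {set T}) : rel T :=
  fun x y => covers_in S x y || covers_in S y x.

Definition hasse_tree (S : {set T}) : Prop :=
  {in S &, forall x y, connect (hasse_edge S) x y} /\
  (forall c : seq T, (3 <= size c)%N -> ~~ ucycleb (hasse_edge S) c).

Definition maximal_in (S : {set T}) (y : T) : Prop :=
  y \in S /\ forall z, z \in S -> y <= z -> z = y.

Definition rooted_tree (S : {set T}) : Prop :=
  [/\ {in S &, forall x y, connect (fun u v => (u \in S) && (v \in S) && (u >=< v)) x y},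
      hasse_tree S &
      exists r, maximal_in S r /\ forall y, maximal_in S y -> y = r].

Definition rooted_forest : Prop :=
  exists Pi : {set {set T}},
    [/\ partition Pi [set: T],
        (forall S1 S2, S1 \in Pi -> S2 \in Pi -> S1 != S2 ->
           forall x y, x \in S1 -> y \in S2 -> ~~ (x >=< y)) &
        (forall S, S \in Pi -> rooted_tree S)].

End PStable.

(* Main.v *)
Require Import Defs.
From HB Require Import structures.
From mathcomp Require Import all_boot all_order.
Set Implicit Arguments. Unset Strict Implicit. Unset Printing Implicit Defensive.
Import Order.Theory.

Section Count.
Variables (disp : Order.disp_t) (T : finPOrderType disp).

Definition deg (m : mono T) : nat := \sum_(p : T) m p.

Lemma sum_pred1 (x : T) : \sum_(p : T) nat_of_bool (x == p) = 1%N.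
Proof.
rewrite (bigD1 x) //= eqxx big1 // => p /negbTE; rewrite eq_sym => ->. by [].
Qed.

Lemma sum_count (s : seq T) : \sum_(p : T) count_mem p s = size s.
Proof.
elim: s => [|x s IH] /=; first by rewrite big1.
by rewrite big_split /= IH sum_pred1.
Qed.

Lemma deg_seq_mono s : deg (seq_mono s) = size s.
Proof. rewrite /deg -sum_count; apply: eq_bigr => p _; by rewrite ffunE. Qed.

Lemma mdvd_deg m1 m2 : mdvd m1 m2 -> (deg m1 <= deg m2)%N.
Proof. move/forallP=> H; apply: leq_sum => p _; exact: H. Qed.

Lemma deg_mmul m1 m2 : deg (mmul m1 m2) = (deg m1 + deg m2)%N.
Proof. rewrite /deg -big_split; apply: eq_bigr => p _; by rewrite ffunE. Qed.

Lemma deg_xvar a : deg (xvar a) = 1%N.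
Proof. rewrite /deg -(sum_pred1 a); apply: eq_bigr => p _; by rewrite ffunE eq_sym. Qed.

Lemma deg_mset B : deg (mset B) = #|B|.
Proof.
rewrite /deg -sum1_card [RHS]big_mkcond /=; apply: eq_bigr => p _; rewrite ffunE.
by case: (p \in B).
Qed.

Lemma maxpowE e (m : mono T) : maxpow e m <-> (e <= deg m)%N.
Proof.
split.
  by case=> s [<- /mdvd_deg]; rewrite deg_seq_mono.
move=> He.
pose s0 := flatten [seq nseq (m p) p | p <- enum T].
have Hc : forall q, count_mem q s0 = m q.
  move=> q; rewrite /s0 count_flatten -map_comp sumnE big_map.
  rewrite (eq_bigr (fun p => nat_of_bool (p == q) * m p)%N); last first.
    by move=> p _ /=; rewrite count_nseq.
  rewrite big_enum /= (bigD1 q) //= eqxx mul1n big1 ?addn0 //.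
  by move=> p /negbTE ->.
have Hs : size s0 = deg m.
  by rewrite -sum_count /deg; apply: eq_bigr => p _; rewrite Hc.
exists (take e s0); split; first by rewrite size_take_min; apply/minn_idPl; rewrite Hs.
apply/forallP => p; rewrite ffunE -Hc -{2}(cat_take_drop e s0) count_cat.
exact: leq_addr.
Qed.

End Count.

Section Graph.
Variables (disp : Order.disp_t) (T : finPOrderType disp).
Local Open Scope order_scope.

Lemma exists_max (P : pred T) (y : T) : P y ->
  exists z, [/\ P z, y <= z & forall w, P w -> z <= w -> w = z].
Proof.
move: {2}#|[set w | P w && (y < w)]| (leqnn #|[set w | P w && (y < w)]|) => n.
elim: n y => [|n IH] y Hn Py.
  exists y; split => // w Pw yw; apply/eqP; rewrite eq_sym; apply/negPn/negP => ne.
  have H0 : (0 < #|[set w | P w && (y < w)%O]|)%N.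
    by apply/card_gt0P; exists w; rewrite inE Pw lt_neqAle ne yw.
  by rewrite leqn0 in Hn; rewrite (eqP Hn) in H0.
case: (boolP [exists w, P w && (y < w)]) => [/existsP [w /andP [Pw yw]]|].
  have [|z [Pz wz zmax]] := IH w _ Pw.
    rewrite -ltnS; apply: leq_trans Hn; apply: proper_card; apply/properP; split.
      apply/subsetP => v; rewrite !inE => /andP [-> /(lt_trans yw) ->]; by [].
    by exists w; rewrite !inE ?Pw ?yw // ltxx andbF.
  by exists z; split => //; apply: le_trans (ltW yw) wz.
move/existsPn => Hno; exists y; split => // w Pw yw; apply/eqP; rewrite eq_sym.
apply/negPn/negP => ne; move: (Hno w); by rewrite Pw lt_neqAle ne yw.
Qed.

Lemma exists_min (P : pred T) (y : T) : P y ->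
  exists z, [/\ P z, z <= y & forall w, P w -> w <= z -> w = z].
Proof.
move: {2}#|[set w | P w && (w < y)]| (leqnn #|[set w | P w && (w < y)]|) => n.
elim: n y => [|n IH] y Hn Py.
  exists y; split => // w Pw yw; apply/eqP; apply/negPn/negP => ne.
  have H0 : (0 < #|[set w | P w && (w < y)%O]|)%N.
    by apply/card_gt0P; exists w; rewrite inE Pw lt_neqAle ne yw.
  by rewrite leqn0 in Hn; rewrite (eqP Hn) in H0.
case: (boolP [exists w, P w && (w < y)]) => [/existsP [w /andP [Pw yw]]|].
  have [|z [Pz wz zmax]] := IH w _ Pw.
    rewrite -ltnS; apply: leq_trans Hn; apply: proper_card; apply/properP; split.
      apply/subsetP => v; rewrite !inE => /andP [-> /lt_trans /(_ yw) ->]; by [].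
    by exists w; rewrite !inE ?Pw ?yw // ltxx andbF.
  by exists z; split => //; apply: le_trans wz (ltW yw).
move/existsPn => Hno; exists y; split => // w Pw yw; apply/eqP.
apply/negPn/negP => ne; move: (Hno w); by rewrite Pw lt_neqAle ne yw.
Qed.


Lemma path_allQ (Q : pred T) (e : rel T) y p :
  path (fun u v => e u v && Q u && Q v) y p -> all Q p.
Proof.
elim: p y => [|z p IH] y //= /andP [/andP [/andP [_ _] ->] /IH]; by [].
Qed.

Lemma cycle_of (e : rel T) (Q : pred T) x y1 y2 : symmetric e -> ~~ Q x ->
  e x y1 -> e x y2 -> y1 != y2 ->
  connect (fun u v => e u v && Q u && Q v) y1 y2 ->
  exists c : seq T, (3 <= size c)%N /\ ucycleb e c.
Proof.
move=> esym nQx exy1 exy2 ne /connectP [p Hp Hl]; subst y2; move: exy2 ne.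
case: (shortenP Hp) => p' Hp' Hu _.
case: p' Hp' Hu => [|z p''] Hp' Hu exy2 ne; first by move: ne; rewrite /= eqxx.
have Hall := path_allQ Hp'.
have Qy1 : Q y1 by move: Hp' => /= /andP [/andP [/andP [_ ->]]].
exists [:: x, y1, z & p'']; split => //.
rewrite /ucycleb; apply/andP; split; last first.
  have -> : uniq [:: x, y1, z & p''] = (x \notin [:: y1, z & p'']) && uniq [:: y1, z & p''] by [].
  rewrite Hu andbT; apply/negP => xin.
  have : all Q [:: y1, z & p''] by rewrite /= Qy1.
  by move/allP/(_ x xin); rewrite (negbTE nQx).
rewrite /cycle rcons_path; apply/andP; split.
  rewrite /= exy1 /=; apply: sub_path Hp' => u v /andP [/andP [->]]; by [].
by rewrite esym.
Qed.

Definition hrel (S : {set T}) (Q : pred T) : rel T :=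
  fun u v => hasse_edge S u v && Q u && Q v.

Lemma up_connect (S : {set T}) (Q : pred T) :
  (forall y z, y \in S -> y >=< z -> z \in S) ->
  (forall u w, Q u -> u <= w -> Q w) ->
  forall u v, u \in S -> Q u -> u <= v -> connect (hrel S Q) u v.
Proof.
move=> Scl Qup u v.
move: {2}#|[set w | (u < w)%O]| (leqnn #|[set w | (u < w)%O]|) => n.
elim: n u => [|n IH] u Hn uS Qu uv.
  case: (eqVneq u v) => [-> //|ne].
  have H0 : (0 < #|[set w | (u < w)%O]|)%N.
    by apply/card_gt0P; exists v; rewrite inE lt_neqAle ne uv.
  by rewrite leqn0 in Hn; rewrite (eqP Hn) in H0.
case: (eqVneq u v) => [-> //|ne].
have uv' : u < v by rewrite lt_neqAle ne uv.
have [w [/andP [uw wv] _ wmin]] := exists_min (P := fun z => (u < z) && (z <= v)) (y := v)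
   (ltac:(by rewrite /= uv' lexx)).
have wS : w \in S by apply: Scl uS _; rewrite le_comparable // ltW.
have Qw : Q w by apply: Qup Qu (ltW uw).
apply: connect_trans (connect1 _) (IH w _ wS Qw wv).
  have Hf : [forall z, ~~ [&& z \in S, u < z & z < w]].
    apply/forallP => z; apply/negP => /and3P [_ uz zw].
    have := wmin z; rewrite uz (le_trans (ltW zw) wv) (ltW zw) => /(_ isT isT) E.
    by rewrite E ltxx in zw.
  by rewrite /hrel Qu Qw andbT /hasse_edge /covers_in uS wS uw Hf.
rewrite -ltnS; apply: leq_trans Hn; apply: proper_card; apply/properP; split.
  apply/subsetP => t; rewrite !inE; exact: lt_trans.
by exists w; rewrite !inE ?uw // ltxx.
Qed.


Lemma hasse_sym (S : {set T}) : symmetric (hasse_edge S).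
Proof. by move=> u v; rewrite /hasse_edge orbC. Qed.

Lemma forest_H : rooted_forest T ->
  forall a b1 b2 : T, a <= b1 -> a <= b2 -> b1 >=< b2.
Proof.
move=> [Pi [Hpart Hcross Htree]] a b1 b2 ab1 ab2.
apply/negPn/negP => nc.
have Hcov : forall y, exists2 S, S \in Pi & y \in S.
  move=> y; move: Hpart => /and3P [/eqP Hc _ _].
  have : y \in cover Pi by rewrite Hc inE.
  by move/bigcupP => [S HS Hy]; exists S.
have [S HS aS] := Hcov a.
have Scl : forall y z, y \in S -> y >=< z -> z \in S.
  move=> y z yS yz; have [S2 HS2 zS2] := Hcov z.
  case: (eqVneq S S2) => [-> //|ne].
  by move: (Hcross _ _ HS HS2 ne y z yS zS2); rewrite yz.
case: (Htree S HS) => _ [_ Hacyc] [r [[rS rmax] runiq]].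
have belowr : forall z, z \in S -> z <= r.
  move=> z zS; have [m [mS zm mmax]] := exists_max (P := fun w => w \in S) zS.
  have : maximal_in S m by split => // w wS mw; exact: mmax.
  by move/runiq => E; rewrite -E.
have [x [/andP [xb1 xb2] ax xmax]] :=
  exists_max (P := fun z => (z <= b1) && (z <= b2)) (y := a) (ltac:(by rewrite /= ab1 ab2)).
have xS : x \in S by apply: Scl aS _; rewrite le_comparable.
have xb1' : x < b1.
  rewrite lt_neqAle xb1 andbT; apply/negP => /eqP E.
  by move: nc; rewrite -E le_comparable.
have xb2' : x < b2.
  rewrite lt_neqAle xb2 andbT; apply/negP => /eqP E.
  by move: nc; rewrite -E comparable_sym le_comparable.
have cov : forall b, x < b -> exists y, [/\ covers_in S x y, y <= b & x < y].
  move=> b xb.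
  have [y [/andP [xy yb] _ ymin]] :=
    exists_min (P := fun z => (x < z) && (z <= b)) (y := b) (ltac:(by rewrite /= xb lexx)).
  exists y; split => //.
  have yS : y \in S by apply: Scl xS _; rewrite le_comparable // ltW.
  have Hf : [forall z, ~~ [&& z \in S, x < z & z < y]].
    apply/forallP => z; apply/negP => /and3P [_ xz zy].
    have := ymin z; rewrite xz (le_trans (ltW zy) yb) (ltW zy) => /(_ isT isT) E.
    by rewrite E ltxx in zy.
  by rewrite /covers_in xS yS xy Hf.
have [y1 [c1 y1b1 xy1]] := cov b1 xb1'.
have [y2 [c2 y2b2 xy2]] := cov b2 xb2'.
have ne : y1 != y2.
  apply/negP => /eqP E.
  have := xmax y1; rewrite y1b1 E y2b2 (ltW xy2) => /(_ isT isT) E2.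
  by rewrite -E2 ltxx in xy2.
have y1S : y1 \in S by move: c1 => /and4P [].
have y2S : y2 \in S by move: c2 => /and4P [].
have Qup : forall u w, x < u -> u <= w -> x < w by move=> u w; apply: lt_le_trans.
have C1 := up_connect Scl Qup y1S xy1 (belowr _ y1S).
have C2 := up_connect Scl Qup y2S xy2 (belowr _ y2S).
have Hsym : connect_sym (hrel S (fun z => x < z)).
  apply: sym_connect_sym => u v; rewrite /hrel hasse_sym; by case: (x < u); case: (x < v); rewrite ?andbT ?andbF.
have C : connect (hrel S (fun z => x < z)) y1 y2 by apply: connect_trans C1 _; rewrite Hsym.
have [c [c3 Hc]] := cycle_of (Q := fun z => x < z) (x := x) (y1 := y1) (y2 := y2) (hasse_sym S) (ltac:(by rewrite /= ltxx)) (ltac:(by rewrite /hasse_edge c1))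
   (ltac:(by rewrite /hasse_edge c2)) ne C.
by move: (Hacyc c c3); rewrite Hc.
Qed.


Lemma two_covers (S : {set T}) z y1 y2 :
  covers_in S z y1 -> covers_in S z y2 -> y1 >=< y2 -> y1 = y2.
Proof.
move=> c1 c2 cmp.
move: (c1) (c2) => /and4P [_ y1S zy1 /forallP f1] /and4P [_ y2S zy2 /forallP f2].
case: (comparable_ltgtP cmp) => [lt|lt|//].
  by move: (f2 y1); rewrite y1S zy1 lt.
by move: (f1 y2); rewrite y2S zy2 lt.
Qed.

Lemma hrel_connect (S : {set T}) Q u v :
  connect (hrel S Q) u v -> connect (hasse_edge S) u v.
Proof. apply: connect_sub => a b /andP [/andP [h _] _]; exact: connect1 h. Qed.

Lemma H_forest : (forall a b1 b2 : T, a <= b1 -> a <= b2 -> b1 >=< b2) ->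
  rooted_forest T.
Proof.
move=> H.
pose R := fun y z : T => [exists u, (y <= u) && (z <= u)].
have Rrefl : forall y, R y y by move=> y; apply/existsP; exists y; rewrite lexx.
have Rsym : forall y z, R y z = R z y.
  by move=> y z; apply/existsP/existsP => [] [u /andP [h1 h2]]; exists u; rewrite h1 h2.
have Rtrans : forall y z w, R y z -> R z w -> R y w.
  move=> y z w /existsP [u /andP [yu zu]] /existsP [v /andP [zv wv]].
  apply/existsP; case: (comparable_leP (H _ _ _ zu zv)) => uv.
    by exists v; rewrite wv (le_trans yu uv).
  by exists u; rewrite yu (le_trans wv (ltW uv)).
have Rcmp : forall y z, y >=< z -> R y z.
  move=> y z yz; apply/existsP; case: (comparable_leP yz) => h.
    by exists z; rewrite h lexx.
  by exists y; rewrite lexx ltW.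
have Req : {in [set: T] & &, equivalence_rel R}.
  move=> x y z _ _ _; split; first exact: Rrefl.
  move=> Rxy; apply/idP/idP => [Rxz|Ryz].
    by apply: Rtrans Rxz; rewrite Rsym.
  exact: Rtrans Rxy Ryz.
exists (equivalence_partition R [set: T]); split.
- exact: equivalence_partitionP.
- move=> S1 S2 /imsetP [x1 _ ->] /imsetP [y1 _ ->] ne x y; rewrite !inE /= => Rx Ry.
  apply/negP => xy; move/negP: ne; apply; apply/eqP/setP => z; rewrite !inE /=.
  have Rxy1 : R x1 y1 := Rtrans _ _ _ Rx (Rtrans _ _ _ (Rcmp _ _ xy) (etrans (Rsym _ _) Ry)).
  apply/idP/idP => h.
    by apply: Rtrans h; rewrite Rsym.
  exact: Rtrans Rxy1 h.
move=> S0 /imsetP [x0 _ ->].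
suff HS : forall S : {set T}, (forall y, (y \in S) = R x0 y) -> rooted_tree S.
  by apply: HS => y; rewrite !inE.
move=> S memS.
have Scl : forall y z, y \in S -> y >=< z -> z \in S.
  move=> y z; rewrite !memS => h yz; exact: Rtrans h (Rcmp _ _ yz).
have RS : forall y z, y \in S -> z \in S -> R y z.
  move=> y z yS zS; apply: (Rtrans _ x0); last by rewrite -memS.
  by rewrite Rsym -memS.
split.
- move=> y z yS zS; case/existsP: (RS _ _ yS zS) => u /andP [yu zu].
  have uS : u \in S by apply: Scl yS _; rewrite le_comparable.
  apply: (connect_trans (y := u)); apply: connect1.
    by rewrite yS uS le_comparable.
  by rewrite uS zS comparable_sym le_comparable.
- split.
  + move=> y z yS zS; case/existsP: (RS _ _ yS zS) => u /andP [yu zu].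
    have Cy := hrel_connect (up_connect (Q := predT) Scl (fun _ _ _ _ => isT) yS isT yu).
    have Cz := hrel_connect (up_connect (Q := predT) Scl (fun _ _ _ _ => isT) zS isT zu).
    apply: connect_trans Cy _; by rewrite (sym_connect_sym (hasse_sym S)).
  + move=> c c3; apply/negP => /andP [Hcyc Hu].
    case: c c3 Hcyc Hu => [//|c0 c'] c3 Hcyc Hu.
    have [z [zc _ zmin]] := exists_min (P := fun w => w \in c0 :: c') (y := c0) (mem_head _ _).
    case/rot_to: zc => i s' Hrot.
    have Hcyc' : cycle (hasse_edge S) (z :: s') by rewrite -Hrot rot_cycle.
    have Hu' : uniq (z :: s') by rewrite -Hrot rot_uniq.
    have Hsz : size (z :: s') = size (c0 :: c') by rewrite -Hrot size_rot.
    have inc : forall t, t \in z :: s' -> t \in c0 :: c' by move=> t; rewrite -Hrot mem_rot.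
    clear Hrot; case: s' Hcyc' Hu' Hsz inc => [|y1 [|w r']] Hcyc' Hu' Hsz inc; rewrite -?Hsz // in c3.
    have cov : forall y, y \in [:: z, y1, w & r'] -> hasse_edge S z y -> covers_in S z y.
      move=> y yin /orP [//|/and4P [_ _ yz _]].
      have E := zmin y (inc _ yin) (ltW yz).
      by rewrite E ltxx in yz.
    move: Hcyc'; rewrite /cycle rcons_path => /andP [/= /andP [h1 _] h2].
    rewrite hasse_sym in h2.
    have y2in : last w r' \in w :: r' by exact: mem_last.
    have c1 := cov y1 (ltac:(by rewrite !inE eqxx orbT)) h1.
    have c2 := cov (last w r') (ltac:(by apply/orP; right; apply/orP; right)) h2.
    move: (c1) (c2) => /and4P [_ _ zy1 _] /and4P [_ _ zy2 _].
    have E := two_covers c1 c2 (H _ _ _ (ltW zy1) (ltW zy2)).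
    move: Hu' => /= /andP [_ /andP [/negP nin _]]; apply: nin; by rewrite E.
- have x0S : x0 \in S by rewrite memS Rrefl.
  have [r [rS _ rmax]] := exists_max (P := fun w => w \in S) x0S.
  exists r; split; first by split.
  move=> y [yS ymax]; case/existsP: (RS _ _ rS yS) => u /andP [ru yu].
  have uS : u \in S by apply: Scl rS _; rewrite le_comparable.
  have E1 := ymax u uS yu; have E2 := rmax u uS ru.
  by rewrite -E1 E2.
Qed.


Lemma path_le_last (x : T) s : path (fun u v : T => u <= v) x s ->
  forall p, p \in x :: s -> p <= last x s.
Proof.
elim: s x => [|y s IH] x /=.
  by move=> _ p; rewrite inE => /eqP ->.
move=> /andP [xy Hp] p; rewrite inE => /orP [/eqP ->|pin].
  apply: le_trans xy _; apply: IH Hp _ (mem_head _ _).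
exact: IH Hp _ pin.
Qed.

Lemma bchain_le (b : T) (C : seq T) : bchain b C -> forall p, p \in C -> p <= b.
Proof.
case: C => [//|c C] /andP [Hs Hl] p pin.
apply: le_trans Hl; exact: path_le_last Hs _ pin.
Qed.

Lemma sorted_nseq_rcons (a b : T) k : a <= b ->
  sorted (fun x y : T => x <= y) (rcons (nseq k a) b).
Proof.
move=> ab; case: k => [//|k] /=; elim: k => [|k IH] /=; by rewrite ?lexx ?ab ?IH.
Qed.

Lemma Pst_H e : (2 <= e)%N -> P_stable (maxpow (T:=T) e) ->
  forall a b1 b2 : T, a <= b1 -> a <= b2 -> b1 >=< b2.
Proof.
move=> He Pst a b1 b2 ab1 ab2; apply/negPn/negP => nc.
have ne12 : b1 != b2 by apply/eqP => E; move: nc; rewrite E comparablexx.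
pose k := (e - 2)%N.
have ek : e = k.+2 by rewrite /k -addn2 subnK.
pose n := seq_mono (nseq k a).
pose B := [set b1; b2].
have degn : deg n = k by rewrite deg_seq_mono size_nseq.
have Hinc : forall p b, p \in B -> b \in B -> p != b -> p <= b -> False.
  move=> p b; rewrite !inE => /orP [/eqP ->|/eqP ->] /orP [/eqP ->|/eqP ->];
    rewrite ?eqxx // => _ h.
    by move: nc; rewrite le_comparable.
  by move: nc; rewrite comparable_sym le_comparable.
suff : maxpow e (mmul n (xvar a)).
  by move/maxpowE; rewrite deg_mmul deg_xvar degn ek addn1 ltnn.
apply: (Pst n B a).
- move=> x y; rewrite !inE => /orP [/eqP ->|/eqP ->] /orP [/eqP ->|/eqP ->] // h.
    by move: nc; rewrite h.
  by move: nc; rewrite comparable_sym h.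
- by apply/maxpowE; rewrite deg_mmul deg_mset cards2 ne12 degn ek addn2.
move=> b bB; exists (rcons (nseq k a) b).
have ab : a <= b by move: bB; rewrite !inE => /orP [/eqP->|/eqP->].
have bchainC : bchain b (rcons (nseq k a) b).
  by rewrite /bchain last_rcons lexx andbT; exact: sorted_nseq_rcons.
split; first split.
- exact: bchainC.
- apply/forallP => p; rewrite !ffunE -cats1 count_cat /= addn0 leq_add2l.
  by case: eqP => // <-; rewrite bB.
- move=> C' bC' inC'.
  have : mdvd (seq_mono C') (mmul n (xvar b)).
    apply/forallP => p; move/forallP: inC' => /(_ p); rewrite !ffunE.
    case: (eqVneq p b) => [->|pb]; first by rewrite bB.
    case pB: (p \in B) => //.
    have -> : count_mem p C' = 0%N.
      apply/count_memPn/negP => pin.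
      exact: Hinc p b pB bB pb (bchain_le bC' pin).
    by [].
  move/mdvd_deg; rewrite deg_seq_mono deg_mmul deg_xvar degn size_rcons size_nseq addn1.
  by [].
- by rewrite /goes_through ab /= all_rcons all_nseq le_comparable // comparablexx orbT.
Qed.

End Graph.

Theorem proposition3p16 (disp : Order.disp_t) (T : finPOrderType disp) (e : nat) :
  (2 <= e)%N -> (P_stable (maxpow (T := T) e) <-> rooted_forest T).
Proof.
move=> He; split.
  by move=> Pst; apply: H_forest; exact: Pst_H He Pst.
move=> Hf n B a Hanti HI Hch.
have H := forest_H Hf.
move/maxpowE: HI; rewrite !deg_mmul deg_mset => HI; apply/maxpowE; rewrite deg_mmul deg_xvar.
apply: leq_trans HI _; rewrite leq_add2l leqNgt; apply/negP => /card_gt1P [x [y [xB yB xy]]].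
have [Cx [_ /andP [ax _]]] := Hch x xB.
have [Cy [_ /andP [ay _]]] := Hch y yB.
by move/eqP: xy; apply; exact: Hanti x y xB yB (H _ _ _ ax ay).
Qed.
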